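(* Let $K$ be the uniform kernel, $K_\varepsilon(u)=\mathbb{I}(u<\varepsilon)$, assume $\Theta'\cap\Theta_1$ is not Lebesgue-null and that $\Theta_1\setminus\Theta'$ is a Lebesgue-null subset of $\Theta$. Define the stationary early rejection rates of ejMCMC and of OejMCMC by $$R_{ej}=1-\iiint\min\{1,\tilde\alpha[(\theta,x),\theta^*]\}\,q(\theta^*\mid\theta)\,\hat\pi_\varepsilon(\theta,x\mid y)\,dx\,d\theta^*\,d\theta,$$ $$R_{Oej}=1-\iiint\min\{1,\breve\alpha[(\theta,x),\theta^*]\}\,q(\theta^*\mid\theta)\,\pi_\varepsilon(\theta,x\mid y)\,dx\,d\theta^*\,d\theta.$$ Then $$R_{ej}-R_{Oej}\ge\int_{\Theta'\cap\Theta_1}\int_{\Theta\setminus\Theta'}\min\left\{1,\frac{\pi(\theta^* )q(\theta\mid\theta^* )}{\pi(\theta)q(\theta^*\mid\theta)}\right\}q(\theta^*\mid\theta)\,\pi_\varepsilon(\theta\mid y)\,d\theta^*\,d\theta\ \ (\ge 0).$$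
   Context: Setting: $\theta\in\Theta\subset\mathbb{R}^p$ with prior density $\pi$; data density $p(x\mid\theta)$; observed data $y$; discrepancy $\Delta(x,y)\ge0$; tolerance $\varepsilon>0$; proposal density $q(\theta^*\mid\theta)$; discrepancy-prediction function $h:\Theta\to\mathbb{R}$. ABC joint posterior $\pi_\varepsilon(\theta,x\mid y)\propto\pi(\theta)p(x\mid\theta)K_\varepsilon(\Delta(x,y))$ with marginal $\pi_\varepsilon(\theta\mid y)$; ejMCMC joint target $\hat\pi_\varepsilon(\theta,x\mid y)\propto\pi(\theta)p(x\mid\theta)\min\{K_\varepsilon(\Delta(x,y)),K_\varepsilon(h(\theta))\}$. $\Theta'=\{\theta:h(\theta)<\varepsilon\}$, $\Theta_1=\{\theta:\pi_\varepsilon(\theta\mid y)>0\}$. Early-rejection ratios: $$\breve\alpha[(\theta,x),\theta^*]=\frac{\pi(\theta^* )q(\theta\mid\theta^* )}{\pi(\theta)q(\theta^*\mid\theta)K_\varepsilon(\Delta(x,y))},\qquad \tilde\alpha[(\theta,x),\theta^*]=\frac{\pi(\theta^* )q(\theta\mid\theta^* )}{\pi(\theta)q(\theta^*\mid\theta)}\cdot\frac{K_\varepsilon(h(\theta^* ))}{\min\{K_\varepsilon(\Delta(x,y)),K_\varepsilon(h(\theta))\}}.$$ (OejMCMC rejects $\theta^*$ before simulating when a uniform $w$ exceeds $\breve\alpha$; ejMCMC when $w$ exceeds $\tilde\alpha$.) *)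

(* Defs.v *)
From HB Require Import structures.
From mathcomp Require Import all_boot all_order all_algebra.
From mathcomp Require Import all_classical all_reals all_analysis.
Set Implicit Arguments. Unset Strict Implicit. Unset Printing Implicit Defensive.
Import Order.TTheory GRing.Theory Num.Theory.
Local Open Scope classical_set_scope.
Local Open Scope ring_scope.

(* Conventions: [pi t] = pi(theta); [p t x] = p(x | theta);
   [q t ts] = q(theta* | theta) (so q(theta | theta* ) = [q ts t]);
   [Delta x] = Delta(x, y) for the fixed observed data y;
   [h t] = discrepancy prediction h(theta).  Real division by 0 is 0. *)

Section ABC.
Variables (R : realType) (dT dX : measure_display)
  (T : measurableType dT) (X : measurableType dX).
Variables (mu : {measure set T -> \bar R}) (nu : {measure set X -> \bar R}).
Variables (Th : set T) (pi : T -> R) (p : T -> X -> R) (q : T -> T -> R)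
  (Delta : X -> R) (h : T -> R) (eps : R).

Definition Kunif (u : R) : R := if u < eps then 1 else 0.

Definition abc_unnorm (t : T) (x : X) : R := pi t * p t x * Kunif (Delta x).
Definition abc_Z : R :=
  fine (\int[mu]_(t in Th) \int[nu]_x (abc_unnorm t x)%:E)%E.
Definition abc_joint (t : T) (x : X) : R := abc_unnorm t x / abc_Z.
Definition abc_marg (t : T) : \bar R := (\int[nu]_x (abc_joint t x)%:E)%E.

Definition ej_unnorm (t : T) (x : X) : R :=
  pi t * p t x * Num.min (Kunif (Delta x)) (Kunif (h t)).
Definition ej_Z : R :=
  fine (\int[mu]_(t in Th) \int[nu]_x (ej_unnorm t x)%:E)%E.
Definition ej_joint (t : T) (x : X) : R := ej_unnorm t x / ej_Z.

Definition Theta' : set T := [set t | Th t /\ h t < eps].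
Definition Theta1 : set T := [set t | Th t /\ (0 < abc_marg t)%E].

Definition mh_ratio (t ts : T) : R := (pi ts * q ts t) / (pi t * q t ts).

Definition alpha_breve (t : T) (x : X) (ts : T) : R :=
  (pi ts * q ts t) / (pi t * q t ts * Kunif (Delta x)).
Definition alpha_tilde (t : T) (x : X) (ts : T) : R :=
  mh_ratio t ts * (Kunif (h ts) / Num.min (Kunif (Delta x)) (Kunif (h t))).

Definition R_ej : \bar R :=
  (1 - \int[mu]_(t in Th) \int[mu]_(ts in Th) \int[nu]_x
        (Num.min 1 (alpha_tilde t x ts) * q t ts * ej_joint t x)%:E)%E.
Definition R_Oej : \bar R :=
  (1 - \int[mu]_(t in Th) \int[mu]_(ts in Th) \int[nu]_x
        (Num.min 1 (alpha_breve t x ts) * q t ts * abc_joint t x)%:E)%E.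

Definition lower_bound : \bar R :=
  (\int[mu]_(t in Theta' `&` Theta1) \int[mu]_(ts in Th `\` Theta')
     ((Num.min 1 (mh_ratio t ts) * q t ts)%:E * abc_marg t))%E.

End ABC.

(* Main.v *)
Require Import Defs.
From HB Require Import structures.
From mathcomp Require Import all_boot all_order all_algebra.
From mathcomp Require Import all_classical all_reals all_analysis.
From mathcomp Require Import ring.
From mathcomp Require Import lra.
Import Order.TTheory GRing.Theory Num.Theory.
Local Open Scope classical_set_scope.
Local Open Scope ring_scope.

Section gen.
Local Open Scope ereal_scope.
Context d (T : measurableType d) (R : realType).
Variable mu : {measure set T -> \bar R}.
Import HBNNSimple.

Lemma sintegral_null (s : {nnsfun T >-> R}) M (mM : measurable M) :
  mu M = 0 -> sintegral mu (proj_nnsfun s mM) = 0.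
Proof.
move=> M0; rewrite sintegralE fsbig1// => r _.
have [->|r0] := eqVneq r 0%R; first by rewrite mul0e.
have -> : mu (proj_nnsfun s mM @^-1` [set r]) = 0.
  apply/eqP; rewrite -measure_le0 -M0 le_measure ?inE//.
  move=> x /=; rewrite /preimage/= measurable_realfun.mindicE.
  by case: (x \in M) /boolP => [/set_mem //|_]; rewrite mulr0 => /esym/eqP; rewrite (negbTE r0).
by rewrite mule0.
Qed.

Lemma int_le_null (D M : set T) (f g : T -> \bar R) : measurable M -> mu M = 0 ->
  (forall x, D x -> 0 <= f x) -> (forall x, D x -> 0 <= g x) ->
  (forall x, D x -> ~ M x -> f x <= g x) ->
  \int[mu]_(x in D) f x <= \int[mu]_(x in D) g x.
Proof.
move=> mM M0 f0 g0 fg; rewrite (ge0_integralE _ f0) (ge0_integralE _ g0).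
apply: ge_ereal_sup => _ [s /= sf <-].
have mCM : measurable (~` M) by exact: measurableC.
apply: (@le_trans _ _ (sintegral mu (proj_nnsfun s mCM))).
  rewrite (eq_sintegral (proj_nnsfun s mCM \+ proj_nnsfun s mM)%R); last first.
    move=> x /=; rewrite !measurable_realfun.mindicE; case: (x \in M) /boolP => xM.
      have -> : (x \in ~` M) = false.
        by apply/negbTE/negP => /set_mem; apply; exact/set_mem.
      by rewrite mulr0 add0r mulr1.
    have -> : (x \in ~` M) = true.
      by apply/mem_set => Mx; apply: (negP xM); exact/mem_set.
    by rewrite mulr0 addr0 mulr1.
  by rewrite sintegralD// (@sintegral_null s M mM M0) adde0.
apply: ereal_sup_ubound; exists (proj_nnsfun s mCM) => // x /=.
rewrite measurable_realfun.mindicE; case: (x \in ~` M) /boolP => xM; last first.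
  by rewrite mulr0 erestrict_ge0.
rewrite mulr1; apply: le_trans (sf x) _; rewrite !patchE.
case: ifPn => xD //; apply: fg; [exact/set_mem|exact/set_mem].
Qed.

Lemma int_le (D : set T) (f g : T -> \bar R) : (forall x, D x -> 0 <= f x) ->
  (forall x, D x -> f x <= g x) ->
  \int[mu]_(x in D) f x <= \int[mu]_(x in D) g x.
Proof.
move=> f0 fg; apply: (@int_le_null _ set0) => //.
all: try by rewrite measure0.
all: try by move=> x Dx _; exact: fg.
all: by move=> x Dx; exact: le_trans (f0 _ Dx) (fg _ Dx).
Qed.

Lemma sup_addle (A B : set (\bar R)) s : A 0 -> B 0 ->
  (forall a b, A a -> B b -> a + b <= s) -> ereal_sup A + ereal_sup B <= s.
Proof.
move=> A0 B0 H.
have H1 b : B b -> ereal_sup A + b <= s.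
  move=> Bb; have := H 0 b A0 Bb; case: b Bb => [r| |] Bb.
  - move=> _; rewrite -leeBrDr//; apply: ge_ereal_sup => a Aa.
    by rewrite leeBrDr//; exact: H.
  - by rewrite add0e leye_eq => /eqP ->; rewrite leey.
  - by move=> _; rewrite addeNy leNye.
have sA0 : 0 <= ereal_sup A by exact: ereal_sup_ubound.
case E: (ereal_sup A) sA0 (H1 0 B0) => [r| |] // _.
- move=> _; rewrite addeC -leeBrDr//; apply: ge_ereal_sup => b Bb.
  by rewrite leeBrDr// addeC -E; exact: H1.
- by rewrite adde0 leye_eq => /eqP ->; rewrite leey.
Qed.

Lemma int_superadd (D : set T) (f g : T -> \bar R) : (forall x, D x -> 0 <= f x) ->
  (forall x, D x -> 0 <= g x) ->
  \int[mu]_(x in D) f x + \int[mu]_(x in D) g x <=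
  \int[mu]_(x in D) (f x + g x).
Proof.
move=> f0 g0; have fg0 x : D x -> 0 <= f x + g x.
  by move=> Dx; rewrite adde_ge0// ?f0 ?g0.
rewrite (ge0_integralE _ f0) (ge0_integralE _ g0) (ge0_integralE _ fg0).
apply: sup_addle.
- by exists nnsfun0 => //=; [move=> x; exact: erestrict_ge0|exact: sintegral0].
- by exists nnsfun0 => //=; [move=> x; exact: erestrict_ge0|exact: sintegral0].
move=> _ _ [s1 /= s1f <-] [s2 /= s2g <-].
rewrite -sintegralD//; apply: ereal_sup_ubound; exists (add_nnsfun s1 s2) => //.
move=> x /=; rewrite EFinD; apply: le_trans (leeD (s1f x) (s2g x)) _.
by rewrite !patchE; case: ifP => //; rewrite adde0.
Qed.

Lemma int_Zl_ge (D : set T) (f : T -> \bar R) (k : R) : (0 <= k)%R -> (forall x, D x -> 0 <= f x) ->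
  k%:E * \int[mu]_(x in D) f x <= \int[mu]_(x in D) (k%:E * f x).
Proof.
move=> k0 f0; have [->|kpos] := eqVneq k 0%R.
  by rewrite mul0e integral_ge0// => x Dx; rewrite mul0e.
have kgt0 : (0 < k)%R by rewrite lt0r kpos.
have kf0 x : D x -> 0 <= k%:E * f x by move=> Dx; rewrite mule_ge0// f0.
rewrite (ge0_integralE _ f0) (ge0_integralE _ kf0) -ereal_sup_pZl//.
apply: ge_ereal_sup => _ [_ [s /= sf <-] <-].
rewrite -sintegralrM; apply: ereal_sup_ubound; exists (scale_nnsfun s k0) => //.
move=> x /=; rewrite EFinM; apply: le_trans (lee_pmul _ _ _ (sf x)) _ => //.
  by rewrite lee_fin.
by rewrite !patchE; case: ifP => //; rewrite mule0.
Qed.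

Lemma int_Zl (D : set T) (f : T -> \bar R) (k : R) : (0 <= k)%R -> (forall x, D x -> 0 <= f x) ->
  \int[mu]_(x in D) (k%:E * f x) = k%:E * \int[mu]_(x in D) f x.
Proof.
move=> k0 f0; apply/eqP; rewrite eq_le int_Zl_ge// andbT.
have [->|kpos] := eqVneq k 0%R.
  by rewrite mul0e; under eq_integral do rewrite mul0e; rewrite integral0.
have kgt0 : (0 < k)%R by rewrite lt0r kpos.
have kf0 x : D x -> 0 <= k%:E * f x by move=> Dx; rewrite mule_ge0// f0.
have ki0 : (0 <= k^-1)%R by rewrite invr_ge0 ltW.
have := @int_Zl_ge D (fun x => k%:E * f x) (k^-1)%R ki0 kf0.
under [X in _ <= X -> _]eq_integral do rewrite muleA -EFinM mulVf// mul1e.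
by rewrite -lee_pdivlMl ?invr_gt0// invrK => ->.
Qed.

End gen.
Arguments int_le_null {d T R mu D M f g}.
Arguments int_le {d T R mu D f g}.
Arguments int_Zl {d T R mu D f k}.
Arguments int_Zl_ge {d T R mu D f k}.
Arguments int_superadd {d T R mu D f g}.

Lemma triple_le d1 d2 (T : measurableType d1) (X : measurableType d2) (R : realType)
  (mu : {measure set T -> \bar R}) (nu : {measure set X -> \bar R}) (Th : set T)
  (A B C : T -> T -> X -> \bar R) :
  (forall t ts x, Th t -> Th ts -> (0 <= B t ts x)%E) ->
  (forall t ts x, Th t -> Th ts -> (0 <= C t ts x)%E) ->
  (forall t ts x, Th t -> Th ts -> (B t ts x + C t ts x <= A t ts x)%E) ->
  (\int[mu]_(t in Th) \int[mu]_(ts in Th) \int[nu]_x B t ts x +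
   \int[mu]_(t in Th) \int[mu]_(ts in Th) \int[nu]_x C t ts x <=
   \int[mu]_(t in Th) \int[mu]_(ts in Th) \int[nu]_x A t ts x)%E.
Proof.
move=> B0 C0 BCA.
apply: le_trans (int_superadd _ _) _.
- by move=> t Tt; apply: integral_ge0 => ts Tts; apply: integral_ge0 => x _; exact: B0.
- by move=> t Tt; apply: integral_ge0 => ts Tts; apply: integral_ge0 => x _; exact: C0.
apply: int_le => t Tt.
  by rewrite adde_ge0 //; apply: integral_ge0 => ts Tts; apply: integral_ge0 => x _; [exact: B0|exact: C0].
apply: le_trans (int_superadd _ _) _.
- by move=> ts Tts; apply: integral_ge0 => x _; exact: B0.
- by move=> ts Tts; apply: integral_ge0 => x _; exact: C0.
apply: int_le => ts Tts.
  by rewrite adde_ge0 //; apply: integral_ge0 => x _; [exact: B0|exact: C0].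
apply: le_trans (int_superadd _ _) _.
- by move=> x _; exact: B0.
- by move=> x _; exact: C0.
apply: int_le => x _; last exact: BCA.
by rewrite adde_ge0 //; [exact: B0|exact: C0].
Qed.

Lemma final_arith (R : realType) (IA IB IC LB : \bar R) (ci : R) :
  (0 <= IB)%E -> (IB <= ci%:E)%E -> (0 <= LB)%E -> (LB <= IC)%E ->
  (IB + IC <= IA)%E -> (LB <= (1 - IB) - (1 - IA))%E.
Proof.
move=> IB0 IBc LB0 LBC key.
have keyL : (IB + LB <= IA)%E := le_trans (leeD (lexx IB) LBC) key.
have IA0 : (0 <= IA)%E := le_trans (adde_ge0 IB0 LB0) keyL.
have IBE : IB = (fine IB)%:E.
  by rewrite fineK // ge0_fin_numE // (le_lt_trans IBc) ?ltry.
clear key LBC IBc; move: keyL IA0 LB0; rewrite IBE; set b := fine IB.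
case: IA => [a| |] //; last by move=> *; rewrite leey.
case: LB => [l| |] //.
  rewrite -EFinD !lee_fin => hl _ _; lra.
Qed.

Lemma Kunif01 {R : realType} (eps u : R) : Kunif eps u = 0 \/ Kunif eps u = 1.
Proof. by rewrite /Kunif; case: ifP; [right|left]. Qed.

Lemma Kunif_ge0 {R : realType} (eps u : R) : 0 <= Kunif eps u.
Proof. by rewrite /Kunif; case: ifP. Qed.

Lemma Kunif_le1 {R : realType} (eps u : R) : Kunif eps u <= 1.
Proof. by rewrite /Kunif; case: ifP. Qed.

Lemma Kunif1 {R : realType} (eps u : R) : u < eps -> Kunif eps u = 1.
Proof. by rewrite /Kunif => ->. Qed.

Lemma Kunif0 {R : realType} (eps u : R) : ~ u < eps -> Kunif eps u = 0.
Proof. by rewrite /Kunif => /negP/negbTE ->. Qed.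

Theorem proposition3 (R : realType) (dT dX : measure_display)
  (T : measurableType dT) (X : measurableType dX)
  (mu : {measure set T -> \bar R}) (nu : {measure set X -> \bar R})
  (Th : set T) (pi : T -> R) (p : T -> X -> R) (q : T -> T -> R)
  (Delta : X -> R) (h : T -> R) (eps : R) :
  sigma_finite setT mu -> sigma_finite setT nu ->
  measurable Th ->
  0 < eps ->
  (* prior density on Theta *)
  (forall t, Th t -> 0 <= pi t) -> measurable_fun Th pi ->
  (\int[mu]_(t in Th) (pi t)%:E = 1)%E ->
  (* data density p(x | theta) *)
  (forall t x, Th t -> 0 <= p t x) ->
  measurable_fun (Th `*` setT) (fun z : T * X => p z.1 z.2) ->
  (forall t, Th t -> (\int[nu]_x (p t x)%:E = 1)%E) ->
  (* proposal density q(theta* | theta) *)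
  (forall t ts, Th t -> Th ts -> 0 <= q t ts) ->
  measurable_fun (Th `*` Th) (fun z : T * T => q z.1 z.2) ->
  (forall t, Th t -> (\int[mu]_(ts in Th) (q t ts)%:E = 1)%E) ->
  (* discrepancy and its prediction *)
  (forall x, 0 <= Delta x) -> measurable_fun setT Delta ->
  measurable_fun Th h ->
  (* assumptions of the proposition *)
  ~ mu.-negligible (Theta' Th h eps `&` Theta1 mu nu Th pi p Delta eps) ->
  mu.-negligible (Theta1 mu nu Th pi p Delta eps `\` Theta' Th h eps) ->
  (R_ej mu nu Th pi p q Delta h eps - R_Oej mu nu Th pi p q Delta eps
     >= lower_bound mu nu Th pi p q Delta h eps)%E
  /\ (lower_bound mu nu Th pi p q Delta h eps >= 0)%E.
Proof.
move=> _ _ mTh eps0 pi0 _ pi1 p0 _ p1 q0 _ q1 _ _ _ nneg Nneg.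
set K := Kunif eps.
have K01 u : K u = 0 \/ K u = 1 by exact: Kunif01.
have K1 u : u < eps -> K u = 1 by exact: Kunif1.
have K0 u : ~ u < eps -> K u = 0 by exact: Kunif0.
have Kge0 u : 0 <= K u by exact: Kunif_ge0.
have Kle1 u : K u <= 1 by exact: Kunif_le1.
set J := abc_unnorm pi p Delta eps.
have JE t x : J t x = pi t * p t x * K (Delta x) by [].
have J0 t x : Th t -> 0 <= J t x.
  by move=> Tt; rewrite JE !mulr_ge0// ?pi0 ?p0 ?Kge0.
set g := fun t => (\int[nu]_x (J t x)%:E)%E.
have g0 t : Th t -> (0 <= g t)%E.
  by move=> Tt; apply: integral_ge0 => x _; rewrite lee_fin J0.
have gpi t : Th t -> (g t <= (pi t)%:E)%E.
  move=> Tt; apply: (@le_trans _ _ (\int[nu]_x ((pi t)%:E * (p t x)%:E))%E).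
    apply: int_le => x _; first by rewrite lee_fin J0.
    by rewrite -EFinM lee_fin JE ler_piMr ?mulr_ge0 ?pi0 ?p0 ?Kle1.
  rewrite int_Zl ?pi0//; last by move=> x _; rewrite lee_fin p0.
  by rewrite p1// mule1.
set c := abc_Z mu nu Th pi p Delta eps.
have intg : (\int[mu]_(t in Th) g t = c%:E)%E.
  have H0 : (0 <= \int[mu]_(t in Th) g t)%E by apply: integral_ge0.
  have H1 : (\int[mu]_(t in Th) g t <= 1)%E.
    by rewrite -pi1; apply: int_le => t Tt; [exact: g0|exact: gpi].
  by rewrite /c /abc_Z fineK// ge0_fin_numE//; apply: le_lt_trans H1 (ltry _).
have c0 : 0 <= c by rewrite -lee_fin -intg integral_ge0// => t; exact: g0.
have margE t : Th t -> abc_marg mu nu Th pi p Delta eps t = ((c^-1)%:E * g t)%E.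
  move=> Tt; rewrite /abc_marg /abc_joint -/J -/c -int_Zl ?invr_ge0//; last first.
    by move=> x _; rewrite lee_fin J0.
  by apply: eq_integral => x _; rewrite -EFinM mulrC.
have cpos : 0 < c.
  rewrite lt0r c0 andbT; apply/negP => /eqP c00; apply: nneg.
  suff -> : Theta' Th h eps `&` Theta1 mu nu Th pi p Delta eps = set0.
    exact: negligible_set0.
  apply/seteqP; split => // t [_ [_]]; rewrite /abc_marg /abc_joint -/c c00.
  by under eq_integral do rewrite invr0 mulr0; rewrite integral0 ltxx.
set c' := ej_Z mu nu Th pi p Delta h eps.
have ejE t x : ej_unnorm pi p Delta h eps t x = K (h t) * J t x.
  rewrite /ej_unnorm JE -/K.
  case: (K01 (Delta x)) => ->; case: (K01 (h t)) => ->;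
  by rewrite ?minxx ?(min_l ler01) ?(min_r ler01) ?mulr0 ?mul0r ?mulr1 ?mul1r.
have gK t : Th t -> (\int[nu]_x (ej_unnorm pi p Delta h eps t x)%:E =
    (K (h t))%:E * g t)%E.
  move=> Tt; rewrite -int_Zl ?Kge0//; last by move=> x _; rewrite lee_fin J0.
  by apply: eq_integral => x _; rewrite ejE EFinM.
case: (Nneg) => A [mA A0 sA].
have intgK : (\int[mu]_(t in Th) ((K (h t))%:E * g t) = \int[mu]_(t in Th) g t)%E.
  apply/eqP; rewrite eq_le; apply/andP; split.
    apply: int_le => t Tt; first by rewrite mule_ge0 ?lee_fin ?Kge0 ?g0.
    by case: (K01 (h t)) => ->; rewrite ?mul0e ?mul1e ?g0.
  apply: (int_le_null mA A0) => t Tt.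
  - exact: g0.
  - by rewrite mule_ge0 ?lee_fin ?Kge0 ?g0.
  move=> nA; have [ht|ht] := boolP (h t < eps); first by rewrite K1// mul1e.
  rewrite K0 ?mul0e; last exact/negP.
  have nT1 : ~ Theta1 mu nu Th pi p Delta eps t.
    by move=> T1; apply: nA; apply: sA; split => //; case=> _; exact/negP.
  have := g0 t Tt; rewrite le_eqVlt => /predU1P[<-//|gt0].
  by exfalso; apply: nT1; split => //; rewrite margE// mule_gt0// lte_fin invr_gt0.
have c'E : c' = c.
  rewrite /c' /ej_Z (eq_integral (fun t => ((K (h t))%:E * g t)%E)); last first.
    by move=> t /[!inE] Tt; rewrite gK.
  by rewrite intgK intg.
pose Af t ts x := (Num.min 1 (alpha_breve pi q Delta eps t x ts) * q t ts *
  abc_joint mu nu Th pi p Delta eps t x)%:E.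
pose Bf t ts x := (Num.min 1 (alpha_tilde pi q Delta h eps t x ts) * q t ts *
  ej_joint mu nu Th pi p Delta h eps t x)%:E.
pose Cf t ts x := (K (h t) * (1 - K (h ts)) * Num.min 1 (mh_ratio pi q t ts) *
  q t ts * abc_joint mu nu Th pi p Delta eps t x)%:E.
have m0 t ts : Th t -> Th ts -> 0 <= mh_ratio pi q t ts.
  by move=> Tt Tts; rewrite divr_ge0 ?mulr_ge0 ?pi0 ?q0.
have mn0 t ts : Th t -> Th ts -> 0 <= Num.min 1 (mh_ratio pi q t ts).
  by move=> Tt Tts; rewrite le_min ler01 m0.
have abcE t x : abc_joint mu nu Th pi p Delta eps t x = J t x / c by [].
have ejjE t x : ej_joint mu nu Th pi p Delta h eps t x = K (h t) * J t x / c.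
  by rewrite /ej_joint -/c' c'E ejE.
have B0 t ts x : Th t -> Th ts -> (0 <= Bf t ts x)%E.
  move=> Tt Tts; rewrite lee_fin ejjE !mulr_ge0 ?q0 ?Kge0 ?J0 ?invr_ge0 ?pi0 ?p0//.
  rewrite le_min ler01 /alpha_tilde mulr_ge0 ?m0// divr_ge0 ?Kge0//.
  by rewrite le_min !Kge0.
have C0 t ts x : Th t -> Th ts -> (0 <= Cf t ts x)%E.
  move=> Tt Tts; rewrite lee_fin abcE !mulr_ge0 ?q0 ?Kge0 ?J0 ?invr_ge0 ?mn0 ?pi0 ?p0//.
  by rewrite subr_ge0.
have BCA t ts x : Th t -> Th ts -> (Bf t ts x + Cf t ts x <= Af t ts x)%E.
  move=> Tt Tts; rewrite /Af /Bf /Cf -EFinD lee_fin ejjE !abcE.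
  rewrite /alpha_breve /alpha_tilde -/K -/(mh_ratio pi q t ts) JE.
  case: (K01 (Delta x)) => ->.
    by rewrite !mulr0 !mul0r !mulr0 addr0.
  case: (K01 (h t)) => ->.
    rewrite !mul0r !mulr0 add0r !mulr1 !mulr_ge0 ?invr_ge0 ?q0 ?pi0 ?p0//.
    exact: mn0.
  rewrite minxx divr1 !mul1r !mulr1.
  case: (K01 (h ts)) => ->.
    by rewrite mulr0 (min_r ler01) !mul0r subr0 mul1r add0r.
  by rewrite mulr1 subrr !mul0r addr0.
have key := @triple_le _ _ _ _ _ mu nu Th Af Bf Cf B0 C0 BCA.
have marg0 t : Th t -> (0 <= abc_marg mu nu Th pi p Delta eps t)%E.
  by move=> Tt; rewrite margE// mule_ge0 ?lee_fin ?invr_ge0 ?g0.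
have CE t ts : Th t -> Th ts -> (\int[nu]_x Cf t ts x =
    (K (h t) * (1 - K (h ts)) * Num.min 1 (mh_ratio pi q t ts) * q t ts)%:E *
    abc_marg mu nu Th pi p Delta eps t)%E.
  move=> Tt Tts; rewrite /Cf; under eq_integral do rewrite EFinM.
  rewrite int_Zl //.
    by rewrite !mulr_ge0 ?Kge0 ?mn0 ?q0 // subr_ge0.
  by move=> x _; rewrite lee_fin abcE mulr_ge0 ?J0 ?invr_ge0.
have LB0 : (0 <= lower_bound mu nu Th pi p q Delta h eps)%E.
  apply: integral_ge0 => t [[Tt _] _]; apply: integral_ge0 => ts [Tts _].
  by rewrite mule_ge0 ?lee_fin ?mulr_ge0 ?mn0 ?q0 ?marg0.
have LBC : (lower_bound mu nu Th pi p q Delta h eps <=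
    \int[mu]_(t in Th) \int[mu]_(ts in Th) \int[nu]_x Cf t ts x)%E.
  rewrite /lower_bound integral_mkcond [X in (_ <= X)%E]integral_mkcond.
  apply: int_le => t _.
    rewrite patchE; case: ifPn => // /set_mem [[Tt _] _].
    apply: integral_ge0 => ts [Tts _].
    by rewrite mule_ge0 ?lee_fin ?mulr_ge0 ?mn0 ?q0 ?marg0.
  rewrite !patchE; case: ifPn => [/set_mem [[Tt ht] T1]|_]; last first.
    case: ifPn => // /set_mem Tt; apply: integral_ge0 => ts Tts.
    by apply: integral_ge0 => x _; exact: C0.
  rewrite mem_set //= integral_mkcond [X in (_ <= X)%E]integral_mkcond.
  apply: int_le => ts _.
    rewrite patchE; case: ifPn => // /set_mem [Tts _].
    by rewrite mule_ge0 ?lee_fin ?mulr_ge0 ?mn0 ?q0 ?marg0.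
  rewrite !patchE; case: ifPn => [/set_mem [Tts nht]|_]; last first.
    case: ifPn => // /set_mem Tts; apply: integral_ge0 => x _; exact: C0.
  rewrite mem_set // CE // K1 // K0; last by move=> hts; apply: nht.
  by rewrite subr0 !mul1r.
have Bbnd t ts x : Th t -> Th ts ->
    (Bf t ts x <= (q t ts * (pi t / c))%:E * (p t x)%:E)%E.
  move=> Tt Tts; rewrite /Bf -EFinM lee_fin ejjE JE.
  have w0 : 0 <= K (h t) * (pi t * p t x * K (Delta x)) / c.
    by rewrite !mulr_ge0 ?Kge0 ?pi0 ?p0 ?invr_ge0.
  rewrite -mulrA; apply: le_trans (ler_piMl _ _) _.
  - by rewrite mulr_ge0 ?q0.
  - by rewrite ge_min lexx.
  have -> : q t ts * (pi t / c) * p t x = q t ts * (pi t * p t x / c) by ring.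
  apply: ler_wpM2l; first exact: q0.
  apply: ler_wpM2r; first by rewrite invr_ge0.
  apply: le_trans (ler_piMl _ (Kle1 _)) _; first by rewrite !mulr_ge0 ?Kge0 ?pi0 ?p0.
  by apply: ler_piMr; rewrite ?mulr_ge0 ?pi0 ?p0 ?Kle1.
have IBfin : (\int[mu]_(t in Th) \int[mu]_(ts in Th) \int[nu]_x Bf t ts x <=
    (c^-1)%:E)%E.
  apply: (@le_trans _ _ (\int[mu]_(t in Th) ((c^-1)%:E * (pi t)%:E))%E); last first.
    have pi0E t : Th t -> (0 <= (pi t)%:E)%E by move=> Tt; rewrite lee_fin pi0.
    by rewrite (int_Zl _ pi0E) ?invr_ge0// pi1 mule1.
  apply: int_le => t Tt.
    by apply: integral_ge0 => ts Tts; apply: integral_ge0 => x _; exact: B0.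
  apply: (@le_trans _ _ (\int[mu]_(ts in Th) ((pi t / c)%:E * (q t ts)%:E))%E).
    apply: int_le => ts Tts.
      by apply: integral_ge0 => x _; exact: B0.
    apply: (@le_trans _ _ (\int[nu]_x ((q t ts * (pi t / c))%:E * (p t x)%:E))%E).
      by apply: int_le => x _; [exact: B0|exact: Bbnd].
    have p0E x : setT x -> (0 <= (p t x)%:E)%E by move=> _; rewrite lee_fin p0.
    rewrite (int_Zl _ p0E); last by rewrite mulr_ge0 ?q0 ?divr_ge0 ?pi0.
    by rewrite p1// mule1 -EFinM mulrC.
  have q0E ts : Th ts -> (0 <= (q t ts)%:E)%E by move=> Tts; rewrite lee_fin q0.
  rewrite (int_Zl _ q0E); last by rewrite divr_ge0 ?pi0.
  by rewrite q1// mule1 -EFinM lee_fin mulrC.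
split; last exact: LB0.
rewrite -[R_ej _ _ _ _ _ _ _ _ _]/(1 - \int[mu]_(t in Th) \int[mu]_(ts in Th) \int[nu]_x Bf t ts x)%E.
rewrite -[R_Oej _ _ _ _ _ _ _ _]/(1 - \int[mu]_(t in Th) \int[mu]_(ts in Th) \int[nu]_x Af t ts x)%E.
have IB0 : (0 <= \int[mu]_(t in Th) \int[mu]_(ts in Th) \int[nu]_x Bf t ts x)%E.
  by apply: integral_ge0 => t Tt; apply: integral_ge0 => ts Tts;
    apply: integral_ge0 => x _; exact: B0.
apply: (@final_arith R _ _ _ _ c^-1).
all: [> exact: IB0 | exact: IBfin | exact: LB0 | exact: LBC | exact: key ].
Qed.
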